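(* Let $f$ satisfy the $L$-descent condition for some $L>0$, and let $\{x^k\}$ be generated by Algorithm IRG with $\theta<\mu$, $\rho_k=\varepsilon_k$ for all $k$, and stepsizes either diminishing ($t_k>0$, $t_k\downarrow0$, $\sum_k t_k=\infty$) or of constant type (there exist $\delta\in(0,2)$ and $\delta'>0$ with $\delta'\le\frac{2-\delta}{L}$ and $t_k\in[\delta',\frac{2-\delta}{L}]$ for all $k$). Assume that $\bar x$ is an accumulation point of $\{x^k\}$ and that $f$ satisfies the KL property at $\bar x$. Then $\bar x$ is a stationary point of $f$ and $x^k\to\bar x$ as $k\to\infty$.
   Context: Algorithm IRG (general inexact reduced gradient framework). Let $f:\mathbb R^n\to\mathbb R$ be continuously differentiable. Parameters: initial point $x^1\in\mathbb R^n$, initial radii $\varepsilon_1>0$, $r_1>0$, reduction factors $\mu,\theta\in(0,1)$, and a sequence $\{\rho_k\}$ of positive numbers. For $k=1,2,\dots$: (1) choose $g^k\in\mathbb R^n$ with $\|g^k-\nabla f(x^k)\|\le\min\{\varepsilon_k,\rho_k\}$; (2) if $\|g^k\|\le r_k+\varepsilon_k$, set $r_{k+1}=\mu r_k$, $\varepsilon_{k+1}=\theta\varepsilon_k$, $d^k=0$; otherwise set $r_{k+1}=r_k$, $\varepsilon_{k+1}=\varepsilon_k$ and $d^k=-\frac{\|g^k\|-\varepsilon_k}{\|g^k\|}g^k$; (3) choose a stepsize $t_k>0$ by some rule; (4) set $x^{k+1}=x^k+t_kd^k$. $f$ satisfies the $L$-descent condition if $f(y)\le f(x)+\langle\nabla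 f(x),y-x\rangle+\frac L2\|y-x\|^2$ for all $x,y\in\mathbb R^n$. KL property: $f$ satisfies the KL property at $\bar x$ if there exist $\eta>0$, a neighborhood $U$ of $\bar x$, and a nondecreasing function $\psi:(0,\eta)\to(0,\infty)$ such that $1/\psi$ is integrable over $(0,\eta)$ and $\|\nabla f(x)\|\ge\psi(f(x)-f(\bar x))$ for all $x\in U$ with $f(\bar x)<f(x)<f(\bar x)+\eta$. *)

(* Defs.v *)
From HB Require Import structures.
From mathcomp Require Import all_boot all_order all_algebra.
From mathcomp Require Import all_classical all_reals all_analysis.
Set Implicit Arguments. Unset Strict Implicit. Unset Printing Implicit Defensive.
Import Order.TTheory GRing.Theory Num.Theory.
Import numFieldNormedType.Exports.
Local Open Scope classical_set_scope.
Local Open Scope ring_scope.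

Section Defs.
Variables (R : realType) (n : nat).

Definition dotv (u v : 'rV[R]_n) : R := \sum_(i < n) u ord0 i * v ord0 i.
Definition enorm (u : 'rV[R]_n) : R := Num.sqrt (dotv u u).

Definition C1_with_gradient (f : 'rV[R]_n -> R) (gradf : 'rV[R]_n -> 'rV[R]_n) :=
  (forall x, differentiable f x) /\
  (forall x h, 'd f x h = dotv (gradf x) h) /\
  continuous gradf.

Definition L_descent (f : 'rV[R]_n -> R) (gradf : 'rV[R]_n -> 'rV[R]_n) (L : R) :=
  forall x y, f y <= f x + dotv (gradf x) (y - x) + L / 2 * (enorm (y - x)) ^+ 2.

Definition KL_at (f : 'rV[R]_n -> R) (gradf : 'rV[R]_n -> 'rV[R]_n) (xbar : 'rV[R]_n) :=
  exists (eta : R) (U : set 'rV[R]_n) (psi : R -> R),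
    [/\ 0 < eta, nbhs xbar U,
        (forall s, 0 < s < eta -> 0 < psi s) /\
        (forall s t, 0 < s -> s <= t -> t < eta -> psi s <= psi t),
        integrable (@lebesgue_measure R) `]0, eta[ (fun s => ((psi s)^-1)%:E) &
        (forall x, U x -> f xbar < f x < f xbar + eta ->
           enorm (gradf x) >= psi (f x - f xbar))].

(* A run of Algorithm IRG (iterations indexed from 0 instead of 1):
   iterates x, approximate gradients g, directions d, radii r, eps,
   stepsizes t, parameters mu, theta and sequence rho. The stepsize rule
   itself is left free here (constrained separately). *)
Definition IRG_run (f : 'rV[R]_n -> R) (gradf : 'rV[R]_n -> 'rV[R]_n)
  (mu theta : R) (rho : nat -> R)
  (x g d : nat -> 'rV[R]_n) (r eps t : nat -> R) :=
  [/\ 0 < eps 0, 0 < r 0, 0 < mu < 1, 0 < theta < 1 /\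
      (forall k, 0 < rho k) &
      forall k,
      [/\ enorm (g k - gradf (x k)) <= Num.min (eps k) (rho k),
          (if enorm (g k) <= r k + eps k then
             [/\ r k.+1 = mu * r k, eps k.+1 = theta * eps k & d k = 0]
           else
             [/\ r k.+1 = r k, eps k.+1 = eps k &
                 d k = - ((enorm (g k) - eps k) / enorm (g k)) *: g k]),
          0 < t k &
          x k.+1 = x k + t k *: d k]].

Definition diminishing_steps (t : nat -> R) :=
  [/\ (forall k, 0 < t k), (forall k, t k.+1 <= t k), t @ \oo --> 0 &
      (fun N => \sum_(k < N) t k) @ \oo --> +oo].

Definition constant_type_steps (L : R) (t : nat -> R) :=
  exists delta delta' : R,
    [/\ 0 < delta < 2, 0 < delta', delta' <= (2 - delta) / L &
        forall k, delta' <= t k <= (2 - delta) / L].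

End Defs.

(* Main.v *)
Require Import Defs.
From HB Require Import structures.
From mathcomp Require Import all_boot all_order all_algebra.
From mathcomp Require Import all_classical all_reals all_analysis.
Import Order.TTheory GRing.Theory Num.Theory.
Import numFieldNormedType.Exports.
Local Open Scope classical_set_scope.
Local Open Scope ring_scope.

From mathcomp Require Import ring lra.
Set Implicit Arguments. Unset Strict Implicit.

Section Vec.
Variables (R : realType) (n : nat).
Implicit Types (u v w : 'rV[R]_n) (a b : R).

Lemma dotvC u v : dotv u v = dotv v u.
Proof. by apply: eq_bigr => i _; rewrite mulrC. Qed.

Lemma dotvDl u v w : dotv (u + v) w = dotv u w + dotv v w.
Proof. by rewrite /dotv -big_split; apply: eq_bigr => i _; rewrite mxE mulrDl. Qed.

Lemma dotvZl a u v : dotv (a *: u) v = a * dotv u v.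
Proof. by rewrite /dotv mulr_sumr; apply: eq_bigr => i _; rewrite mxE mulrA. Qed.

Lemma dotvNl u v : dotv (- u) v = - dotv u v.
Proof. by rewrite -scaleN1r dotvZl mulN1r. Qed.

Lemma dotvBl u v w : dotv (u - v) w = dotv u w - dotv v w.
Proof. by rewrite dotvDl dotvNl. Qed.

Lemma dotvDr u v w : dotv w (u + v) = dotv w u + dotv w v.
Proof. by rewrite dotvC dotvDl !(dotvC w). Qed.

Lemma dotvZr a u v : dotv v (a *: u) = a * dotv v u.
Proof. by rewrite dotvC dotvZl dotvC. Qed.

Lemma dotvBr u v w : dotv w (u - v) = dotv w u - dotv w v.
Proof. by rewrite dotvC dotvBl !(dotvC w). Qed.

Lemma dotv0l v : dotv 0 v = 0.
Proof. by rewrite /dotv big1 // => i _; rewrite mxE mul0r. Qed.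

Lemma dotv0r v : dotv v 0 = 0.
Proof. by rewrite dotvC dotv0l. Qed.

Lemma dotv_ge0 u : 0 <= dotv u u.
Proof. by rewrite /dotv; apply: sumr_ge0 => i _; rewrite -expr2 sqr_ge0. Qed.

Lemma dotv_eq0 u : dotv u u = 0 -> u = 0.
Proof.
move=> /eqP; rewrite /dotv psumr_eq0; last by move=> i _; rewrite -expr2 sqr_ge0.
move=> /allP H; apply/rowP => i; rewrite mxE.
have /H : i \in index_enum 'I_n by rewrite mem_index_enum.
by rewrite /= mulf_eq0 orbb => /eqP.
Qed.

Lemma enorm_ge0 u : 0 <= enorm u.
Proof. exact: sqrtr_ge0. Qed.

Lemma enorm_sq u : enorm u ^+ 2 = dotv u u.
Proof. by rewrite /enorm sqr_sqrtr // dotv_ge0. Qed.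

Lemma enorm_eq0 u : enorm u = 0 -> u = 0.
Proof. by move=> H; apply: dotv_eq0; rewrite -enorm_sq H expr0n. Qed.

Lemma enorm0 : enorm (0 : 'rV[R]_n) = 0.
Proof. by rewrite /enorm dotv0l sqrtr0. Qed.

Lemma enorm_sqrtsq a : 0 <= a -> Num.sqrt (a ^+ 2) = a.
Proof. by move=> ha; rewrite sqrtr_sqr ger0_norm. Qed.

Lemma enormZ a u : enorm (a *: u) = `|a| * enorm u.
Proof.
rewrite /enorm dotvZl dotvZr mulrA -expr2 sqrtrM ?sqr_ge0 //.
by rewrite sqrtr_sqr.
Qed.

Lemma enormN u : enorm (- u) = enorm u.
Proof. by rewrite -scaleN1r enormZ normrN normr1 mul1r. Qed.

Lemma enormB u v : enorm (u - v) = enorm (v - u).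
Proof. by rewrite -enormN opprB. Qed.

Lemma CS u v : dotv u v <= enorm u * enorm v.
Proof.
have [/dotv_eq0 ->|vn0] := eqVneq (dotv v v) 0.
  by rewrite dotv0r mulr_ge0 // enorm_ge0.
set a := dotv v v; set b := dotv u v.
have ha : 0 < a by rewrite lt_neqAle eq_sym vn0 dotv_ge0.
have H := dotv_ge0 (a *: u - b *: v).
rewrite !(dotvBl, dotvBr, dotvZl, dotvZr) -/a -/b (dotvC v u) -/b in H.
have H2 : b ^+ 2 <= dotv u u * a.
  have : 0 <= a * (a * dotv u u - b ^+ 2) by move: H; rewrite expr2; nra.
  by rewrite pmulr_rge0 // subr_ge0 mulrC.
have : `|b| <= enorm u * enorm v.
  rewrite -(ger0_norm (mulr_ge0 (enorm_ge0 u) (enorm_ge0 v))).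
  rewrite -ler_sqr ?nnegrE ?normr_ge0 //.
  by rewrite !real_normK ?num_real // exprMn !enorm_sq.
by apply: le_trans; rewrite ler_norm.
Qed.

Lemma CSn u v : - (enorm u * enorm v) <= dotv u v.
Proof. by rewrite -enormN lerNl -dotvNl CS. Qed.

Lemma enormD u v : enorm (u + v) <= enorm u + enorm v.
Proof.
rewrite -ler_sqr ?nnegrE ?addr_ge0 ?enorm_ge0 //.
rewrite enorm_sq !(dotvDl, dotvDr) (dotvC v u) sqrrD !enorm_sq.
have := CS u v; lra.
Qed.

Lemma coord_le u i : `|u ord0 i| <= enorm u.
Proof.
rewrite -ler_sqr ?nnegrE ?enorm_ge0 ?normr_ge0 // real_normK ?num_real //.
rewrite enorm_sq /dotv (bigD1 i) //= -expr2 lerDl.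
by apply: sumr_ge0 => j _; rewrite -expr2 sqr_ge0.
Qed.

Lemma mxnorm_le u : `|u| <= enorm u.
Proof.
rewrite (_ : `|u| = mx_norm u) // mx_normrE; apply: bigmax_le; first exact: enorm_ge0.
by move=> [i j] _ /=; rewrite (ord1 i); apply: coord_le.
Qed.

Lemma enorm_le_mx u : enorm u ^+ 2 <= n%:R * `|u| ^+ 2.
Proof.
rewrite enorm_sq /dotv -[n in n%:R]card_ord -sumr_const.

rewrite mulr_suml; apply: ler_sum => i _; rewrite mul1r -expr2 -real_normK ?num_real //.
rewrite ler_sqr ?nnegrE ?normr_ge0 //.
rewrite (_ : `|u| = mx_norm u) // mx_normrE.
by apply: (le_trans _ (le_bigmax _ _ (ord0, i))).
Qed.

End Vec.

Lemma enorm_tri (R : realType) (n : nat) (u v w : 'rV[R]_n) :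
  enorm (u - w) <= enorm (u - v) + enorm (v - w).
Proof.
have -> : u - w = (u - v) + (v - w) by rewrite addrA subrK.
exact: enormD.
Qed.

Section Pot.
Variables (R : realType) (eta : R) (psi : R -> R).
Hypothesis eta0 : 0 < eta.
Hypothesis psi0 : forall s, 0 < s < eta -> 0 < psi s.
Hypothesis psimon : forall s t, 0 < s -> s <= t -> t < eta -> psi s <= psi t.
Hypothesis hint : integrable (@lebesgue_measure R) `]0, eta[ (fun s => ((psi s)^-1)%:E).

Let mu := (@lebesgue_measure R).
Let h s := (psi s)^-1.
Definition Fp a := \int[mu]_(s in `]0, a[) h s.

Lemma int_sub a : 0 < a <= eta -> mu.-integrable `]0, a[ (EFin \o h).
Proof.
move=> /andP[a0 ae]; apply: (integrableS _ _ _ hint) => //.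
move=> s /=; rewrite !in_itv /= => /andP[-> sa] /=; lra.
Qed.

Lemma Fp_diff a b : 0 < b -> b <= a -> a < eta -> (a - b) / psi a <= Fp a - Fp b.
Proof.
move=> b0 ba ae.
have [->|bna] := eqVneq b a; first by rewrite !subrr mul0r.
have {bna} ba' : b < a by rewrite lt_neqAle bna ba.
have ha : mu.-integrable `]0, a[ (EFin \o h) by apply: int_sub; lra.
have E : `]0, a[%classic = `]0, b[%classic `|` `[b, a[%classic.
  by apply: itv_bndbnd_setU; rewrite bnd_simp.
have dj : [disjoint `]0, b[ & `[b, a[]%classic.
  apply/disj_setPS => s [] /=; rewrite !in_itv /= => /andP[_ h1] /andP[h2 _]; lra.
rewrite /Fp E Rintegral_setU //; last by rewrite -E.
rewrite addrAC subrr add0r.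
have hb : mu.-integrable `[b, a[ (EFin \o h).
  apply: (integrableS _ _ _ ha) => //; rewrite E; exact: subsetUr.
rewrite /Rintegral.
have -> : (a - b) / psi a = fine ((psi a)^-1%:E * mu `[b, a[)%E.
  rewrite /mu lebesgue_measure_itv /= lte_fin ifT; last by [].
  by rewrite (_ : (a%:E + (- b)%:E)%E = (a - b)%:E) //= mulrC.
apply: (@fine_le R).
- by rewrite /mu lebesgue_measure_itv /= lte_fin ifT.
- exact: integrable_fin_num.
rewrite -integral_cst //.
apply: ge0_le_integral => //.
- move=> s _; rewrite /= lee_fin invr_ge0 ltW // psi0 //; lra.
- exact: (measurable_int _ hb).
move=> s /=; rewrite in_itv /= => /andP[h1 h2].
rewrite lee_fin /h lef_pV2 ?posrE ?psi0 //; try lra.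
apply: psimon; lra.
Qed.

Lemma Fp_ge0 a : 0 < a -> a < eta -> 0 <= Fp a.
Proof.
move=> a0 ae; apply: Rintegral_ge0 => s /=; rewrite in_itv /= => /andP[h1 h2].
by rewrite /h invr_ge0 ltW // psi0 //; lra.
Qed.

Lemma potential : exists G : R -> R,
  [/\ (forall s, 0 < s -> s < eta -> 0 <= G s),
      (forall a b, 0 < b -> b <= a -> a < eta -> (a - b) / psi a <= G a - G b) &
      (forall e, 0 < e -> exists2 s0, 0 < s0 & 
         forall s, 0 < s -> s <= s0 -> s < eta -> G s <= e)].
Proof.
pose S := [set y | exists2 s, 0 < s < eta & y = Fp s].
have lbS : has_lbound S by exists 0 => y [s /andP[s0 se] ->]; apply: Fp_ge0.
have neS : S !=set0.
  exists (Fp (eta / 2)); exists (eta / 2) => //; apply/andP; split; [by rewrite divr_gt0 | by rewrite ltr_pdivrMr // ltr_pMr // ltr1n].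
exists (fun s => Fp s - inf S); split.
- move=> s s0 se; rewrite subr_ge0; apply: ge_inf => //.
  by exists s => //; apply/andP.
- by move=> a b b0 ba ae; rewrite opprB addrA subrK; apply: Fp_diff.
move=> e e0; have [y [s1 /andP[s10 s1e] ->] hy] := inf_adherent e0 (conj neS lbS).
exists s1 => // s s0 ss1 se.
have := @Fp_diff s1 s s0 ss1 s1e.
have : 0 <= (s1 - s) / psi s1 by rewrite divr_ge0 ?subr_ge0 // ltW // psi0 //; apply/andP.
lra.
Qed.
End Pot.

Section Basic.
Variables (R : realType) (n : nat)
  (f : 'rV[R]_n -> R) (gradf : 'rV[R]_n -> 'rV[R]_n) (L : R)
  (mu theta : R) (rho : nat -> R)
  (x g d : nat -> 'rV[R]_n) (r eps t : nat -> R).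
Hypothesis HL : 0 < L.
Hypothesis Hdesc : L_descent f gradf L.
Hypothesis Hrun : IRG_run f gradf mu theta rho x g d r eps t.
Hypothesis Hthmu : theta < mu.
Hypothesis Hrho : forall k, rho k = eps k.

Definition null k := enorm (g k) <= r k + eps k.

Lemma mu01 : 0 < mu < 1. Proof. by case: Hrun. Qed.
Lemma theta01 : 0 < theta < 1. Proof. by case: Hrun => _ _ _ []. Qed.
Lemma tpos k : 0 < t k. Proof. by case: Hrun => _ _ _ _ /(_ k) []. Qed.
Lemma xstep k : x k.+1 = x k + t k *: d k. Proof. by case: Hrun => _ _ _ _ /(_ k) []. Qed.
Lemma gerr k : enorm (g k - gradf (x k)) <= eps k.
Proof.
case: Hrun => _ _ _ _ /(_ k) [+ _ _ _]; rewrite Hrho minxx //.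
Qed.

Lemma null_step k : null k -> [/\ r k.+1 = mu * r k, eps k.+1 = theta * eps k & d k = 0].
Proof. rewrite /null => nk; case: Hrun => _ _ _ _ /(_ k) [_ + _ _]; by rewrite nk. Qed.

Lemma nnull_step k : ~~ null k -> [/\ r k.+1 = r k, eps k.+1 = eps k &
                 d k = - ((enorm (g k) - eps k) / enorm (g k)) *: g k].
Proof. rewrite /null => /negbTE nk; case: Hrun => _ _ _ _ /(_ k) [_ + _ _]; by rewrite nk. Qed.

Lemma pos_re k : 0 < r k /\ 0 < eps k.
Proof.
elim: k => [|k [hr he]]; first by case: Hrun.
have := mu01; have := theta01.
have [/null_step [-> -> _]|/nnull_step [-> -> _]] := boolP (null k).
  by move=> /andP[? _] /andP[? _]; split; apply: mulr_gt0.
by [].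
Qed.

Lemma ratio k : eps k * r 0 <= eps 0 * r k.
Proof.
elim: k => [|k IH]; first by rewrite mulrC.
have [hr he] := pos_re k.
have [/null_step [-> -> _]|/nnull_step [-> -> _]] := boolP (null k) => //.
have := mu01; have := theta01; have [r00 e00] := pos_re 0.
move=> /andP[th0 _] /andP[mu0 _].
have h1 : theta * (eps k * r 0) <= theta * (eps 0 * r k) by rewrite ler_pM2l.
have h2 : theta * (eps 0 * r k) <= mu * (eps 0 * r k).
  by rewrite ler_pM2r ?ltW // mulr_gt0.
lra.
Qed.

Definition cc := eps 0 / r 0.

Lemma cc_ge0 : 0 <= cc.
Proof. by have [? ?] := pos_re 0; rewrite /cc divr_ge0 // ltW. Qed.

Lemma eps_le k : eps k <= cc * r k.
Proof.
have [r00 _] := pos_re 0.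
by rewrite /cc mulrAC ler_pdivlMr // ratio.
Qed.

Lemma nnull_d k : ~~ null k ->
  enorm (d k) = enorm (g k) - eps k /\ r k < enorm (d k).
Proof.
move=> nk; have [_ _ ->] := nnull_step nk.
have [hr he] := pos_re k.
move: nk; rewrite /null -ltNge => hg.
have g0 : 0 < enorm (g k) by apply: lt_trans hg; rewrite addr_gt0.
rewrite enormZ normrN ger0_norm; last by apply: divr_ge0; lra.
rewrite divfK; last by rewrite gt_eqF.
split => //; lra.
Qed.

Lemma dot_d k : dotv (gradf (x k)) (d k) <= - enorm (d k) ^+ 2.
Proof.
have [nk|nk] := boolP (null k).
  by have [_ _ ->] := null_step nk; rewrite dotv0r enorm0 expr0n oppr0.
have [hd _] := nnull_d nk.
rewrite hd; have [_ _ ->] := nnull_step nk.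
have [hr he] := pos_re k.
move: nk; rewrite /null -ltNge => hg.
have g0 : 0 < enorm (g k) by apply: lt_trans hg; rewrite addr_gt0.
set c := (enorm (g k) - eps k) / enorm (g k).
have c0 : 0 <= c by apply: divr_ge0; lra.
rewrite dotvZr.
have E : gradf (x k) = g k - (g k - gradf (x k)) by rewrite opprB addrC subrK.
rewrite {1}E dotvBl -enorm_sq.
have h1 := CS (g k - gradf (x k)) (g k).
have h2 := gerr k.
have h3 : dotv (g k - gradf (x k)) (g k) <= eps k * enorm (g k).
  apply: le_trans h1 _; rewrite ler_pM2r //.
have h4 : c * (enorm (g k) ^+ 2 - eps k * enorm (g k)) <= 
          c * (enorm (g k) ^+ 2 - dotv (g k - gradf (x k)) (g k)).
  by rewrite ler_wpM2l // lerD2l lerN2.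
have h5 : c * (enorm (g k) ^+ 2 - eps k * enorm (g k)) = (enorm (g k) - eps k) ^+ 2.
  rewrite /c; field; by rewrite gt_eqF.
rewrite mulNr lerN2; lra.
Qed.

Lemma grad_nnull k : ~~ null k -> enorm (gradf (x k)) <= (1 + 2 * cc) * enorm (d k).
Proof.
move=> nk; have [hd hrd] := nnull_d nk.
have E : gradf (x k) = g k - (g k - gradf (x k)) by rewrite opprB addrC subrK.
have h1 : enorm (gradf (x k)) <= enorm (g k) + eps k.
  rewrite E; apply: le_trans (enormD _ _) _; rewrite enormN lerD2l; exact: gerr.
have := eps_le k; have := cc_ge0; have [hr he] := pos_re k.
have : cc * r k <= cc * enorm (d k) by apply: ler_wpM2l; [exact: cc_ge0 | exact: ltW].
lra.
Qed.

Lemma grad_null k : null k -> enorm (gradf (x k)) <= r k + 2 * eps k.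
Proof.
move=> nk.
have E : gradf (x k) = g k - (g k - gradf (x k)) by rewrite opprB addrC subrK.
have h1 : enorm (gradf (x k)) <= enorm (g k) + eps k.
  rewrite E; apply: le_trans (enormD _ _) _; rewrite enormN lerD2l; exact: gerr.
move: nk; rewrite /null; lra.
Qed.

Lemma dx k : enorm (x k.+1 - x k) = t k * enorm (d k).
Proof.
have E : x k.+1 - x k = t k *: d k by rewrite xstep addrAC subrr add0r.
by rewrite E enormZ ger0_norm //; exact: ltW (tpos k).
Qed.

Lemma descent k : f (x k.+1) <= f (x k) - t k * (1 - L * t k / 2) * enorm (d k) ^+ 2.
Proof.
have := Hdesc (x k) (x k.+1).
Proof.
have := Hdesc (x k) (x k.+1).
have E : x k.+1 - x k = t k *: d k by rewrite xstep addrAC subrr add0r.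
rewrite E dotvZr enormZ ger0_norm; last exact: ltW (tpos k).
have := dot_d k; have := tpos k.
set D := dotv _ _; set N := enorm (d k); set T := t k.
move=> T0 hD h.
have : T * D <= - T * N ^+ 2 by rewrite mulNr -mulrN ler_pM2l.
move: h; set X := f _; nra.
Qed.

End Basic.

Lemma steps_facts (R : realType) (L : R) (t : nat -> R) : 0 < L -> (forall k, 0 < t k) ->
  (diminishing_steps t \/ constant_type_steps L t) ->
  exists alpha K0, [/\ 0 < alpha,
    (forall k, (K0 <= k)%N -> alpha * t k <= t k * (1 - L * t k / 2)) &
    (forall M, exists N, M <= \sum_(k < N) t k)].
Proof.
move=> L0 tp [[_ _ t0 tsum]|[delta [delta' [/andP[dl0 dl2] dp0 _ tb]]]].
- have /cvgrPdist_lt /(_ (L^-1)) := t0.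
  rewrite invr_gt0 => /(_ L0) [K0 _ HK].
  exists (1/2), K0; split => //.
  + move=> k /HK /=; rewrite sub0r normrN ger0_norm; last exact: ltW (tp k).
    move=> tk.
    have : L * t k < 1 by rewrite -ltr_pdivlMl // mulrC mul1r.
    have := tp k; nra.
  + move=> M; have /cvgryPge /(_ M) [N _ HN] := tsum.
    by exists N; apply: (HN N) => /=.
- exists (delta / 2), 0%N; split.
  + by rewrite divr_gt0.
  + move=> k _; have /andP[h1 h2] := tb k.
    have : L * t k <= 2 - delta by rewrite mulrC -ler_pdivlMr.
    have := tp k; nra.
  + move=> M; exists (Num.bound (`|M| / delta')).
    have hb := archi_boundP (divr_ge0 (normr_ge0 M) (ltW dp0)).
    apply: (le_trans (ler_norm M)).
    apply: (le_trans (y := (Num.bound (`|M| / delta'))%:R * delta')).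
      by rewrite -ler_pdivrMr //; exact: ltW.
    set N := Num.bound _.
    have -> : N%:R * delta' = \sum_(k < N) delta'.
      by rewrite sumr_const card_ord mulr_natl.
    by apply: ler_sum => k _; have /andP[] := tb k.
Qed.

Section Topo.
Variables (R : realType) (n : nat).

Lemma enorm_lt (u : 'rV[R]_n) e : 0 < e -> `|u| < e / n.+1%:R -> enorm u < e.
Proof.
move=> e0 hu.
have n0 : 0 < n.+1%:R :> R by rewrite ltr0n.
have hu2 : `|u| ^+ 2 < (e / n.+1%:R) ^+ 2.
  by rewrite ltr_pXn2r ?nnegrE ?normr_ge0 // divr_ge0 // ltW.
have h1 := enorm_le_mx u.
rewrite -(ltr_pXn2r (n := 2)) ?nnegrE ?enorm_ge0 ?ltW //.
apply: (le_lt_trans h1).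
have hn : n%:R <= n.+1%:R :> R by rewrite ler_nat.
have : n%:R * `|u| ^+ 2 <= n.+1%:R * `|u| ^+ 2 by rewrite ler_wpM2r ?sqr_ge0.
move=> h2; apply: (le_lt_trans h2).
have : n.+1%:R * (e / n.+1%:R) ^+ 2 <= e ^+ 2.
  have -> : n.+1%:R * (e / n.+1%:R) ^+ 2 = e ^+ 2 / n.+1%:R.
    by field; apply: lt0r_neq0; have := ler0n R n; lra.

  by rewrite ler_pdivrMr // ler_peMr ?sqr_ge0 // ler1n.
apply: lt_le_trans; by rewrite ltr_pM2l.
Qed.

Lemma normr_le_enorm (u : 'rV[R]_n) : `|u| <= enorm u.
Proof. exact: mxnorm_le. Qed.

Lemma cont_fe (f : 'rV[R]_n -> R) xb : {for xb, continuous f} ->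
  forall e, 0 < e -> exists2 del, 0 < del & forall y, enorm (y - xb) < del -> `|f y - f xb| < e.
Proof.
move=> /cvgrPdist_lt hc e e0; have /nbhs_ballP [del del0 Hb] := hc e e0.
exists del => // y hy; rewrite distrC; apply: Hb.
rewrite -ball_normE /ball_ /=; apply: le_lt_trans (normr_le_enorm _) _.
by rewrite enormB.
Qed.

Lemma cont_ge (h : 'rV[R]_n -> 'rV[R]_n) xb : {for xb, continuous h} ->
  forall e, 0 < e -> exists2 del, 0 < del & forall y, enorm (y - xb) < del -> enorm (h y - h xb) < e.
Proof.
move=> /cvgrPdist_lt hc e e0.
have e1 : 0 < e / n.+1%:R by rewrite divr_gt0 // ltr0n.
have /nbhs_ballP [del del0 Hb] := hc _ e1.
exists del => // y hy; apply: enorm_lt => //; rewrite distrC; apply: Hb.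
rewrite -ball_normE /ball_ /=; apply: le_lt_trans (normr_le_enorm _) _.
by rewrite enormB.
Qed.

Lemma cluster_e (x : nat -> 'rV[R]_n) xb : cluster (x @ \oo) xb ->
  forall e K, 0 < e -> exists k, (K <= k)%N /\ enorm (x k - xb) < e.
Proof.
move=> hc e K e0.
have e1 : 0 < e / n.+1%:R by rewrite divr_gt0 // ltr0n.
have := hc [set y | exists k, (K <= k)%N /\ y = x k] (ball xb (e / n.+1%:R)).
case.
- by exists K => // k /= Kk; exists k.
- exact: nbhsx_ballx.
move=> y [[k [Kk ->]]] hb; exists k; split => //.
rewrite enormB; apply: enorm_lt => //.
by move: hb; rewrite -ball_normE.
Qed.

Lemma cvg_e (x : nat -> 'rV[R]_n) xb :
  (forall e, 0 < e -> exists K, forall k, (K <= k)%N -> enorm (x k - xb) < e) ->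
  x @ \oo --> xb.
Proof.
move=> H; apply/cvgrPdist_lt => e e0; have [K HK] := H e e0.
exists K => // k /= Kk; apply: le_lt_trans (normr_le_enorm _) _.
by rewrite enormB; apply: HK.
Qed.
End Topo.

Section Main.
Variables (R : realType) (n : nat)
  (f : 'rV[R]_n -> R) (gradf : 'rV[R]_n -> 'rV[R]_n) (L : R)
  (mu theta : R) (rho : nat -> R)
  (x g d : nat -> 'rV[R]_n) (r eps t : nat -> R) (xbar : 'rV[R]_n)
  (alpha : R) (K0 : nat).
Hypothesis HC1 : C1_with_gradient f gradf.
Hypothesis HL : 0 < L.
Hypothesis Hdesc : L_descent f gradf L.
Hypothesis Hrun : IRG_run f gradf mu theta rho x g d r eps t.
Hypothesis Hthmu : theta < mu.
Hypothesis Hrho : forall k, rho k = eps k.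
Hypothesis Hclust : cluster (x @ \oo) xbar.
Hypothesis Halpha : 0 < alpha.
Hypothesis HK0 : forall k, (K0 <= k)%N -> alpha * t k <= t k * (1 - L * t k / 2).
Hypothesis Hsum : forall M, exists N, M <= \sum_(k < N) t k.
Hypothesis HKL : KL_at f gradf xbar.

Let nul k := null g r eps k.
Let a k := f (x k) - f xbar.
Let C := 1 + 2 * cc r eps.

Lemma tp k : 0 < t k. Proof. exact: (tpos Hrun k). Qed.
Lemma nstep k : nul k -> [/\ r k.+1 = mu * r k, eps k.+1 = theta * eps k & d k = 0].
Proof. move=> nk; exact: (null_step Hrun nk). Qed.
Lemma nnstep k : ~~ nul k -> [/\ r k.+1 = r k, eps k.+1 = eps k &
                 d k = - ((enorm (g k) - eps k) / enorm (g k)) *: g k].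
Proof. move=> nk; exact: (nnull_step Hrun nk). Qed.
Lemma nnd k : ~~ nul k -> enorm (d k) = enorm (g k) - eps k /\ r k < enorm (d k).
Proof. move=> nk; exact: (nnull_d Hrun nk). Qed.
Lemma gnn k : ~~ nul k -> enorm (gradf (x k)) <= C * enorm (d k).
Proof. move=> nk; exact: (grad_nnull Hrun Hthmu Hrho nk). Qed.
Lemma gn k : nul k -> enorm (gradf (x k)) <= r k + 2 * eps k.
Proof. move=> nk; exact: (grad_null Hrun Hrho nk). Qed.
Lemma dxk k : enorm (x k.+1 - x k) = t k * enorm (d k).
Proof. exact: (dx Hrun k). Qed.
Lemma epsle k : eps k <= cc r eps * r k.
Proof. exact: (eps_le Hrun Hthmu k). Qed.
Lemma pre k : 0 < r k /\ 0 < eps k.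
Proof. exact: (pos_re Hrun k). Qed.
Lemma cc0 : 0 <= cc r eps.
Proof. exact: (cc_ge0 Hrun). Qed.
Lemma C1 : 1 <= C.
Proof. have := cc0; rewrite /C; lra. Qed.
Lemma mu_01 : 0 < mu < 1. Proof. exact: (mu01 Hrun). Qed.

Lemma desc2 k : (K0 <= k)%N -> a k.+1 <= a k - alpha * t k * enorm (d k) ^+ 2.
Proof.
move=> Kk; have h1 : f (x k.+1) <= f (x k) - t k * (1 - L * t k / 2) * enorm (d k) ^+ 2.
  exact: (descent Hdesc Hrun Hrho k).
have h2 := HK0 Kk.
have h3 : alpha * t k * enorm (d k) ^+ 2 <= t k * (1 - L * t k / 2) * enorm (d k) ^+ 2.
  by rewrite ler_wpM2r ?sqr_ge0.
rewrite /a; lra.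
Qed.

Lemma dstep k : x k.+1 = x k + t k *: d k. Proof. exact: (xstep Hrun k). Qed.

Lemma mono k m : (K0 <= k)%N -> a (k + m) <= a k.
Proof.
move=> Kk; elim: m => [|m IH]; first by rewrite addn0.
rewrite addnS; apply: le_trans (desc2 _) _; first by apply: leq_trans (leq_addr _ _).
have : 0 <= alpha * t (k + m) * enorm (d (k + m)) ^+ 2.
  by rewrite mulr_ge0 ?sqr_ge0 // mulr_ge0 // ltW ?tp.
lra.
Qed.

Lemma mono' k j : (K0 <= k)%N -> (k <= j)%N -> a j <= a k.
Proof. by move=> Kk /subnKC <-; apply: mono. Qed.

Lemma fcont : {for xbar, continuous f}.
Proof. by case: HC1 => /(_ xbar) /differentiable_continuous. Qed.

Lemma gcont : {for xbar, continuous gradf}.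
Proof. by case: HC1 => _ [_ /(_ xbar)]. Qed.

Lemma a_ge0 k : (K0 <= k)%N -> 0 <= a k.
Proof.
move=> Kk; rewrite leNgt; apply/negP => ak.
have e0 : 0 < - a k by rewrite oppr_gt0.
have [del del0 Hd] := cont_fe fcont e0.
have [j [kj hj]] := cluster_e Hclust k del0.
have := Hd _ hj; have := mono' Kk kj; rewrite /a.
move=> h1 h2; move: h2; rewrite ltr_norml; lra.
Qed.

Lemma a_small e : 0 < e -> exists K, (K0 <= K)%N /\ forall k, (K <= k)%N -> a k < e.
Proof.
move=> e0; have [del del0 Hd] := cont_fe fcont e0.
have [j [kj hj]] := cluster_e Hclust K0 del0.
exists j; split => // k jk; apply: le_lt_trans (mono' kj jk) _.
by have := Hd _ hj; rewrite ltr_norml /a => /andP[].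
Qed.

Lemma r_noninc k : r k.+1 <= r k.
Proof.
have [hr _] := pre k; have := mu_01.
have [/nstep [-> _ _]|/nnstep [-> _ _]] := boolP (nul k) => //.
move=> /andP[m0 m1]; nra.
Qed.

Lemma r_mono k m : r (k + m) <= r k.
Proof.
elim: m => [|m IH]; first by rewrite addn0.
by rewrite addnS; apply: le_trans (r_noninc _) IH.
Qed.

Lemma r_mono' k j : (k <= j)%N -> r j <= r k.
Proof. by move=> /subnKC <-; apply: r_mono. Qed.

Definition Ssum N := \sum_(k < N) t k.

Lemma S_mono N m : Ssum N <= Ssum (N + m).
Proof.
elim: m => [|m IH]; first by rewrite addn0.
apply: le_trans IH _; rewrite addnS /Ssum big_ord_recr /= lerDl; exact: ltW (tp _).
Qed.

Lemma inf_null K : exists k, (K <= k)%N /\ nul k.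
Proof.
apply: contrapT => /forallNP H.
have nn k : (K <= k)%N -> ~~ nul k.
  by move=> Kk; apply/negP => nk; apply: (H k); split.
pose K' := maxn K K0.
have KK' : (K <= K')%N by rewrite leq_maxl.
have K0K' : (K0 <= K')%N by rewrite leq_maxr.
have rc m : r (K' + m) = r K'.
  elim: m => [|m IH]; first by rewrite addn0.
  rewrite addnS; have [-> _ _] := nnstep (nn (K' + m) (leq_trans KK' (leq_addr m K'))).
  by [].
set rr := r K'.
have [rr0 _] := pre K'.
have main m : a (K' + m) <= a K' - alpha * rr ^+ 2 * (Ssum (K' + m) - Ssum K').
  elim: m => [|m IH]; first by rewrite addn0 subrr mulr0 subr0.
  rewrite addnS.
  have h1 := desc2 (leq_trans K0K' (leq_addr m K')).
  have [_ h2] := nnd (nn _ (leq_trans KK' (leq_addr m K'))).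
  rewrite rc in h2.
  have h3 : rr ^+ 2 <= enorm (d (K' + m)) ^+ 2.
    by rewrite ler_pXn2r ?nnegrE ?enorm_ge0 // ltW.
  have h4 : alpha * t (K' + m) * rr ^+ 2 <= alpha * t (K' + m) * enorm (d (K' + m)) ^+ 2.
    by rewrite ler_wpM2l // mulr_ge0 // ltW ?tp.
  have h5 : Ssum (K' + m).+1 = Ssum (K' + m) + t (K' + m) by rewrite /Ssum big_ord_recr.
  rewrite h5; lra.
have ar0 : 0 < alpha * rr ^+ 2 by rewrite mulr_gt0 // exprn_gt0.
have [N HN] := Hsum (Ssum K' + (a K' + 1) / (alpha * rr ^+ 2)).
have h1 := main N.
have h2 : Ssum N <= Ssum (K' + N) by rewrite addnC; apply: S_mono.
have h3 : alpha * rr ^+ 2 * (Ssum (K' + N) - Ssum K') >= a K' + 1.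
  have HN' : Ssum K' + (a K' + 1) / (alpha * rr ^+ 2) <= Ssum N by []. rewrite mulrC -ler_pdivrMr //; lra.
have := a_ge0 (leq_trans K0K' (leq_addr N K')); lra.
Qed.


Lemma r_to0 e : 0 < e -> exists K, forall k, (K <= k)%N -> r k < e.
Proof.
move=> e0.
pose Sr := [set y | exists k, y = r k].
have lb : has_lbound Sr by exists 0 => y [k ->]; exact: ltW (pre k).1.
have ne : Sr !=set0 by exists (r 0); exists 0%N.
suff [k hk] : exists k, r k < e.
  by exists k => j kj; apply: le_lt_trans (r_mono' kj) hk.
set I := inf Sr.
have [I0|I0] := leP I 0.
  have [y [k ->] hy] := inf_adherent e0 (conj ne lb).
  by exists k; rewrite -/I in hy; lra.
exfalso; have /andP[m0 m1] := mu_01.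
have ep : 0 < I / mu - I.
  rewrite subr_gt0 ltr_pdivlMr //; nra.
have [y [k ->] hy] := inf_adherent ep (conj ne lb).
rewrite -/I in hy.
have hy' : r k < I / mu by lra.
rewrite ltr_pdivlMr // in hy'.
have [j [kj nj]] := inf_null k.
have [hrj _ _] := nstep nj.
have h1 := r_mono' kj.
have h2 : I <= r j.+1 by apply: (ge_inf lb); exists j.+1.
have h3 : mu * r j <= mu * r k by rewrite ler_wpM2l // ltW.
rewrite hrj in h2; lra.
Qed.

Lemma stat : (forall e, 0 < e -> exists K, forall k, (K <= k)%N -> enorm (x k - xbar) < e) ->
  gradf xbar = 0.
Proof.
move=> Hx; apply: enorm_eq0; apply/eqP; rewrite eq_le enorm_ge0 andbT.
rewrite leNgt; apply/negP => hz.
set z := enorm (gradf xbar) in hz *.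
have z2 : 0 < z / 2 by rewrite divr_gt0.
have [del del0 Hd] := cont_ge gcont z2.
have [K1 HK1] := Hx del del0.
have C0 : 0 < 2 * C by have := C1; lra.
have ze : 0 < z / (2 * C) by rewrite divr_gt0.
have [K2 HK2] := r_to0 ze.
have [j [Kj nj]] := inf_null (maxn K1 K2).
have h1 := gn nj.
have h2 := HK2 j (leq_trans (leq_maxr _ _) Kj).
have h3 := Hd _ (HK1 j (leq_trans (leq_maxl _ _) Kj)).
rewrite ltr_pdivlMr // in h2.
have h4 := epsle j.
have h5 : cc r eps * r j * 2 <= 2 * cc r eps * r j by lra.
have E : gradf xbar = gradf (x j) + (gradf xbar - gradf (x j)) by rewrite addrC subrK.
have h6 : z <= enorm (gradf (x j)) + enorm (gradf (x j) - gradf xbar).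
  by rewrite /z {1}E enormB; apply: enormD.
move: h2; rewrite /C; lra.
Qed.


Lemma caseA k0 : (K0 <= k0)%N -> a k0 = 0 ->
  forall e, 0 < e -> exists K, forall k, (K <= k)%N -> enorm (x k - xbar) < e.
Proof.
move=> Kk0 ak0 e e0.
have K0j j : (k0 <= j)%N -> (K0 <= j)%N by move=> h; apply: leq_trans h.
have zero j : (k0 <= j)%N -> a j = 0.
  move=> kj; apply/eqP; rewrite eq_le a_ge0 ?K0j // andbT.
  by rewrite -ak0 mono'.
have dz j : (k0 <= j)%N -> d j = 0.
  move=> kj; have h := desc2 (K0j j kj).
  have z1 := zero j kj.
  have z2 := zero j.+1 (leq_trans kj (leqnSn j)).
  apply: enorm_eq0.
  have h2 : alpha * t j * enorm (d j) ^+ 2 <= 0 by lra.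
  have h3 : 0 < alpha * t j by rewrite mulr_gt0 // tp.
  have h4 : enorm (d j) ^+ 2 <= 0.
    by rewrite -(pmulr_rle0 _ h3).
  apply/eqP; rewrite -sqrf_eq0 eq_le h4 sqr_ge0 //.
have xc m : x (k0 + m) = x k0.
  elim: m => [|m IH]; first by rewrite addn0.
  by rewrite addnS dstep dz ?leq_addr // scaler0 addr0.
have [j [kj hj]] := cluster_e Hclust k0 e0.
exists k0 => k kk; rewrite -(subnKC kk) xc.
by move: hj; rewrite -(subnKC kj) xc.
Qed.


Lemma caseB : (forall k, (K0 <= k)%N -> 0 < a k) ->
  forall e, 0 < e -> exists K, forall k, (K <= k)%N -> enorm (x k - xbar) < e.
Proof.
move=> apos.
case: HKL => eta [U [psi [eta0 nbU [psip psim] hint hKL]]].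
have [G [G0 Gd Gsmall]] := @potential _ _ _ eta0 psip psim hint.
have /nbhs_ballP [rU rU0 HU] := nbU.
have inU y : enorm (y - xbar) < rU -> U y.
  move=> hy; apply: HU; rewrite -ball_normE /ball_ /=.
  by apply: le_lt_trans (normr_le_enorm _) _; rewrite enormB.
have C0 : 0 < C by have := C1; lra.
set beta := C / alpha.
have beta0 : 0 < beta by rewrite divr_gt0.
have step k : (K0 <= k)%N -> U (x k) -> a k < eta ->
    enorm (x k.+1 - x k) <= beta * (G (a k) - G (a k.+1)).
  move=> Kk Uk ake.
  have ak0 := apos k Kk.
  have ak1 := apos k.+1 (leq_trans Kk (leqnSn k)).
  have am : a k.+1 <= a k by apply: mono'; [|exact: leqnSn].
  have hG := Gd (a k) (a k.+1) ak1 am ake.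
  have P0 : 0 < psi (a k) by apply: psip; apply/andP.
  have DP0 : 0 <= (a k - a k.+1) / psi (a k) by rewrite divr_ge0 ?subr_ge0 // ltW.
  have [nk|nk] := boolP (nul k).
    have [_ _ dk] := nstep nk.
    rewrite dxk dk enorm0 mulr0; apply: mulr_ge0; [exact: ltW | lra].
  have hP : psi (a k) <= enorm (gradf (x k)).
    apply: hKL => //; apply/andP; rewrite /a in ak0 ake; split; lra.
  have hg := gnn nk.
  have hd := desc2 Kk.
  rewrite dxk.
  set T := t k in hd *; set N := enorm (d k) in hg hd *; set P := psi (a k) in hG P0 DP0 hP *.
  set D := a k - a k.+1 in hG DP0 *.
  have T0 : 0 < T by apply: tp.
  have N0 : 0 <= N by apply: enorm_ge0.
  have hPN : P <= C * N by lra.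
  have h1 : alpha * P * (T * N) <= alpha * (C * N) * (T * N).
    apply: ler_wpM2r; [by rewrite mulr_ge0 // ltW | apply: ler_wpM2l => //; exact: ltW].
  have h2 : alpha * T * N ^+ 2 <= D by rewrite /D; lra.
  have h3 : alpha * (C * N) * (T * N) <= C * D.
    have -> : alpha * (C * N) * (T * N) = C * (alpha * T * N ^+ 2) by ring.
    by rewrite ler_wpM2l // ltW.
  have h4 : T * N <= beta * (D / P).
    have aP : 0 < alpha * P by rewrite mulr_gt0.
    have -> : beta * (D / P) = (C * D) / (alpha * P).
      by rewrite /beta; field; apply/andP; split; rewrite gt_eqF.
    rewrite ler_pdivlMr // mulrC; lra.
  apply: le_trans h4 _; rewrite ler_wpM2l // ltW //.
set rh := rU / 2.
have rh0 : 0 < rh by rewrite divr_gt0.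
have rhE : rh * 2 = rU by rewrite /rh; field.
have [s0 s00 Gs] := Gsmall (rh / beta) (divr_gt0 rh0 beta0).
have [K1 [K01 HK1]] := a_small eta0.
have [K2 [K02 HK2]] := a_small s00.
set K' := maxn K1 K2.
have hK'1 k : (K' <= k)%N -> a k < eta by move=> h; apply: HK1; apply: leq_trans h; apply: leq_maxl.
have hK'2 k : (K' <= k)%N -> a k < s0 by move=> h; apply: HK2; apply: leq_trans h; apply: leq_maxr.
have K0K' : (K0 <= K')%N by apply: leq_trans K01 (leq_maxl _ _).
have [K [K'K hK]] := cluster_e Hclust K' rh0.
have K0K : (K0 <= K)%N by apply: leq_trans K0K' K'K.
have GaK : beta * G (a K) <= rh.
  have := Gs (a K) (apos K K0K) (ltW (hK'2 K K'K)) (hK'1 K K'K).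
  by rewrite ler_pdivlMr // mulrC.
have Gnn k : (K' <= k)%N -> 0 <= G (a k).
  move=> h; apply: G0; [apply: apos; exact: leq_trans K0K' h | exact: hK'1].
have P m : enorm (x (K + m) - x K) <= beta * (G (a K) - G (a (K + m))).
  elim: m => [|m IH]; first by rewrite addn0 subrr enorm0 subrr mulr0.
  have KmK' : (K' <= K + m)%N by apply: leq_trans K'K (leq_addr _ _).
  have Um : U (x (K + m)).
    apply: inU; apply: le_lt_trans (enorm_tri _ (x K) _) _.
    have hg0 := Gnn _ KmK'; have : beta * G (a (K + m)) >= 0 by apply: mulr_ge0 => //; exact: ltW.
    move: IH; rewrite mulrBr; lra.
  have hs := step (K + m) (leq_trans K0K' KmK') Um (hK'1 _ KmK').
  rewrite addnS; apply: le_trans (enorm_tri _ (x (K + m)) _) _.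
  move: hs IH; rewrite !mulrBr; lra.
have Uall k : (K <= k)%N -> U (x k).
  move=> Kk; rewrite -(subnKC Kk); apply: inU.
  apply: le_lt_trans (enorm_tri _ (x K) _) _.
  have KmK' : (K' <= K + (k - K))%N by apply: leq_trans K'K (leq_addr _ _).
  have hg0 := Gnn _ KmK'; have : beta * G (a (K + (k - K))%N) >= 0 by apply: mulr_ge0 => //; exact: ltW.
  move: (P (k - K)%N); rewrite mulrBr; lra.
have Tel M m : (K <= M)%N -> enorm (x (M + m) - x M) <= beta * (G (a M) - G (a (M + m))).
  move=> KM; elim: m => [|m IH]; first by rewrite addn0 subrr enorm0 subrr mulr0.
  have KMm : (K <= M + m)%N by apply: leq_trans KM (leq_addr _ _).
  have K'Mm : (K' <= M + m)%N by apply: leq_trans K'K KMm.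
  have hs := step (M + m) (leq_trans K0K KMm) (Uall _ KMm) (hK'1 _ K'Mm).
  rewrite addnS; apply: le_trans (enorm_tri _ (x (M + m)) _) _.
  move: hs IH; rewrite !mulrBr; lra.
move=> e e0.
have e2 : 0 < e / 2 by rewrite divr_gt0.
have [s1 s10 Gs1] := Gsmall (e / 2 / beta) (divr_gt0 e2 beta0).
have [K3 [K03 HK3]] := a_small s10.
set M0 := maxn (maxn K K3) K'.
have [M [M0M hM]] := cluster_e Hclust M0 e2.
have KM : (K <= M)%N by apply: leq_trans M0M; apply: leq_trans (leq_maxl _ _) (leq_maxl _ _).
have K3M : (K3 <= M)%N by apply: leq_trans M0M; apply: leq_trans (leq_maxr _ _) (leq_maxl _ _).
have K'M : (K' <= M)%N by apply: leq_trans M0M; apply: leq_maxr.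
have GaM : beta * G (a M) <= e / 2.
  have := Gs1 (a M) (apos M (leq_trans K0K KM)) (ltW (HK3 M K3M)) (hK'1 M K'M).
  by rewrite ler_pdivlMr // mulrC.
exists M => k Mk; rewrite -(subnKC Mk).
apply: le_lt_trans (enorm_tri _ (x M) _) _.
have := Tel M (k - M)%N KM.
have hg0 := Gnn _ (leq_trans K'M (leq_addr (k - M)%N M)).
have : beta * G (a (M + (k - M))%N) >= 0 by apply: mulr_ge0 => //; exact: ltW.
rewrite mulrBr; lra.
Qed.

End Main.

Unset Implicit Arguments.

Theorem mainTheorem14 (R : realType) (n : nat)
  (f : 'rV[R]_n -> R) (gradf : 'rV[R]_n -> 'rV[R]_n) (L : R)
  (mu theta : R) (rho : nat -> R)
  (x g d : nat -> 'rV[R]_n) (r eps t : nat -> R) (xbar : 'rV[R]_n) :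
  C1_with_gradient f gradf ->
  0 < L -> L_descent f gradf L ->
  IRG_run f gradf mu theta rho x g d r eps t ->
  theta < mu ->
  (forall k, rho k = eps k) ->
  (diminishing_steps t \/ constant_type_steps L t) ->
  cluster (x @ \oo) xbar ->
  KL_at f gradf xbar ->
  gradf xbar = 0 /\ x @ \oo --> xbar.
Proof.
move=> HC1 HL Hdesc Hrun Hthmu Hrho Hsteps Hclust HKL.
have [alpha [K0 [Ha HK0 Hs]]] := steps_facts HL (tpos Hrun) Hsteps.
have conv : forall e, 0 < e -> exists K, forall k, (K <= k)%N -> enorm (x k - xbar) < e.
  case: (pselect (exists k, (K0 <= k)%N /\ f (x k) - f xbar = 0)).
    move=> [k0 [Kk0 ak0]].
    exact: (caseA HC1 Hdesc Hrun Hrho Hclust Ha HK0 Kk0 ak0).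
  move=> H; apply: (caseB HC1 Hdesc Hrun Hthmu Hrho Hclust Ha HK0 HKL).
  move=> k Kk; rewrite lt_neqAle (a_ge0 HC1 Hdesc Hrun Hrho Hclust Ha HK0 Kk) andbT.
  by apply/eqP => h; apply: H; exists k; split.
split; last exact: cvg_e conv.
exact: (stat HC1 Hdesc Hrun Hthmu Hrho Hclust Ha HK0 Hs conv).
Qed.
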